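(* Let $0<s_1<s_2$, $m\ge 2$, $N=4m+1$, and let $\mathcal C\in\mathbb R^{N\times N}$ be the defect capacitance matrix. For a square matrix $M$ write $\chi_M(x)=\det(xI-M)$, and put $z=x-\alpha$. Then $$\chi_{\mathcal C}(x)=\chi_{A_{2m}^{(\beta_2,0)}(\alpha,\beta_1,\beta_2)}(x)\cdot\Big(\big[(z-\beta_1)P_m^*(x)+\big(\beta_2(\beta_1-\beta_2)z-\beta_2\beta_1^2-(\beta_1-\beta_2)\beta_2^2\big)P_{m-1}^*(x)\big]-\beta_2^2\big[(z-\beta_2)P_{m-1}^*(x)-\beta_2\beta_1^2P_{m-2}^*(x)\big]\Big).$$ Equivalently, $\chi_{\mathcal C}=\chi_{A_{2m+1}^{(\beta_2,\beta_1-\beta_2)}(\alpha,\beta_1,\beta_2)}\,\chi_{A_{2m}^{(0,\beta_2)}(\alpha,\beta_1,\beta_2)}-\beta_2^2\,\chi_{A_{2m}^{(\beta_2,0)}(\alpha,\beta_1,\beta_2)}\,\chi_{A_{2m-1}^{(0,\beta_2)}(\alpha,\beta_2,\beta_1)}$, where the matrices $A_{2m}^{(0,\beta_2)}(\alpha,\beta_1,\beta_2)$ and $A_{2m}^{(\beta_2,0)}(\alpha,\beta_1,\beta_2)$ have the same characteristic polynomial.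
   Context: Set $\alpha=\frac1{s_1}+\frac1{s_2}$, $\beta_1=-\frac1{s_1}$, $\beta_2=-\frac1{s_2}$, $\eta=\frac{2}{s_2}$. The defect capacitance matrix $\mathcal C=\mathcal C_N$ ($N=4m+1$) is the real symmetric tridiagonal matrix with diagonal entries $\mathcal C_{11}=\mathcal C_{NN}=\frac1{s_1}$, $\mathcal C_{2m+1,2m+1}=\eta$, and $\mathcal C_{ii}=\alpha$ otherwise, and off-diagonal entries $\mathcal C_{i,i+1}=\mathcal C_{i+1,i}$ equal to $\beta_1$ for $i$ odd and $\beta_2$ for $i$ even when $1\le i\le 2m$, and equal to $\beta_2$ for $i$ odd and $\beta_1$ for $i$ even when $2m+1\le i\le 4m$. (It is the capacitance matrix of $4m+1$ resonators whose spacings alternate $s_1,s_2,\dots$ up to the centre resonator and are mirrored afterwards.) For reals $\alpha,\beta_1,\beta_2,a,b$: $A_{2k+1}^{(a,b)}(\alpha,\beta_1,\beta_2)\in\mathbb R^{(2k+1)\times(2k+1)}$ is the symmetric tridiagonal matrix with diagonal $(\alpha+a,\alpha,\dots,\alpha,\alpha+b)$ and $(i,i+1)$ off-diagonal entries $\beta_1$ for $i$ odd, $\beta_2$ for $i$ even ($1\le i\le 2k$); $A_{2k}^{(a,b)}(\alpha,\beta_1,\beta_2)\in\mathbb R^{2k\times 2k}$ is defined in the same way with size $2k$ (first and last off-diagonal entries $\beta_1$). With $U_k$ the Chebyshev polynomials of the second kind, $P_k^*(x):=(\beta_1\beta_2)^kU_k\!\Big(\frac{(x-\alpha)^2-\beta_1^2-\beta_2^2}{2\beta_1\beta_2}\Big)$.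 *)

(* Defs.v *)
From HB Require Import structures.
From mathcomp Require Import all_boot all_order all_algebra.
Set Implicit Arguments. Unset Strict Implicit. Unset Printing Implicit Defensive.
Import Order.TTheory GRing.Theory Num.Theory.
Local Open Scope ring_scope.

Section Defs.
Variable R : realFieldType.

(* Symmetric tridiagonal n x n matrix, with 1-based data:
   diagonal entry (i,i) = d i, off-diagonal entry (i,i+1)=(i+1,i) = o i. *)
Definition tridiag (n : nat) (d o : nat -> R) : 'M[R]_n :=
  \matrix_(i < n, j < n)
    if i == j :> nat then d i.+1
    else if j == i.+1 :> nat then o i.+1
    else if i == j.+1 :> nat then o j.+1
    else 0.

(* A_n^{(a,b)}(alpha,beta1,beta2): diagonal (alpha+a, alpha, ..., alpha, alpha+b),
   off-diagonal (i,i+1) entries beta1 for i odd, beta2 for i even (1-based). *)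
Definition Amat (n : nat) (a b alpha beta1 beta2 : R) : 'M[R]_n :=
  tridiag n
    (fun i => alpha + (if i == 1%N then a else 0) + (if i == n then b else 0))
    (fun i => if odd i then beta1 else beta2).

Definition alpha_ (s1 s2 : R) : R := s1^-1 + s2^-1.
Definition beta1_ (s1 : R) : R := - s1^-1.
Definition beta2_ (s2 : R) : R := - s2^-1.
Definition eta_ (s2 : R) : R := 2 / s2.

Definition defect_cap (m : nat) (s1 s2 : R) : 'M[R]_(4 * m + 1) :=
  tridiag (4 * m + 1)
    (fun i => if (i == 1%N) || (i == 4 * m + 1)%N then s1^-1
              else if i == (2 * m + 1)%N then eta_ s2
              else alpha_ s1 s2)
    (fun i => if (i <= 2 * m)%N then
                (if odd i then beta1_ s1 else beta2_ s2)
              else (if odd i then beta2_ s2 else beta1_ s1)).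

Fixpoint chebU (t : R) (k : nat) : R :=
  match k with
  | 0 => 1
  | 1 => 2 * t
  | (k'.+1 as k1).+1 => 2 * t * chebU t k1 - chebU t k'
  end.

Definition Pstar (alpha beta1 beta2 : R) (k : nat) (x : R) : R :=
  (beta1 * beta2) ^+ k *
  chebU (((x - alpha) ^+ 2 - beta1 ^+ 2 - beta2 ^+ 2) / (2 * beta1 * beta2)) k.

Definition chi (n : nat) (M : 'M[R]_n) (x : R) : R := \det (x%:M - M).

End Defs.

(* Main.v *)
Require Import Defs.
From HB Require Import structures.
From mathcomp Require Import all_boot all_order all_algebra.
Import Order.TTheory GRing.Theory Num.Theory.
Local Open Scope ring_scope.
From mathcomp Require Import zify ring lra.
Set Implicit Arguments. Unset Strict Implicit. Unset Printing Implicit Defensive.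
Import Order.TTheory GRing.Theory Num.Theory.
Local Open Scope ring_scope.

Section S.
Variable R : realFieldType.

Fixpoint F (d o : nat -> R) (n : nat) : R :=
  match n with
  | 0 => 1
  | 1 => d 1%N
  | (k.+1 as n1).+1 => d n1.+1 * F d o n1 - o n1 ^+ 2 * F d o k
  end.


Ltac genF := repeat match goal with |- context[F ?d ?o ?n] => generalize (F d o n); intro end.

Lemma neqF (a b : nat) : a <> b -> (a == b) = false.
Proof. by move/eqP/negbTE. Qed.
Lemma bumpL h i : (i < h)%N -> bump h i = i.
Proof. by rewrite /bump; case: leqP. Qed.
Lemma bumpR h i : (h <= i)%N -> bump h i = i.+1.
Proof. by rewrite /bump => ->. Qed.

Lemma tri_minor n (d o : nat -> R) :
  row' ord_max (col' ord_max (tridiag n.+1 d o)) = tridiag n d o.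
Proof.
apply/matrixP => i j; rewrite !mxE /=.
have bi : forall k : 'I_n, bump n k = k by move=> k; rewrite /bump; have := ltn_ord k; case: leqP => //= _ _; rewrite add0n.
by rewrite !bi.
Qed.


Lemma tri_minor2 n (d o : nat -> R) :
  \det (row' ord_max (col' (widen_ord (leqnSn n.+1) ord_max) (tridiag n.+2 d o)))
   = o n.+1 * \det (tridiag n d o).
Proof.
rewrite (expand_det_col _ ord_max) big_ord_recr /= big1 ?add0r; last first.
  move=> i _; rewrite !mxE /=; have hi := ltn_ord i.
  rewrite bumpL ?bumpR //; last lia.
  by rewrite !ifF ?mul0r //; apply: neqF; lia.
rewrite !mxE /= bumpL // bumpR // ifF ?eqxx; last by apply: neqF; lia.
congr (_ * _); rewrite /cofactor -signr_odd addnn odd_double expr0 mul1r.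
congr (\det _); apply/matrixP => i j; rewrite !mxE /=; have hi := ltn_ord i; have hj := ltn_ord j.
rewrite (@bumpL n i) // (@bumpL n j) // (@bumpL n.+1 i) ?(@bumpL n j) //; lia.
Qed.

Lemma det_tri_S2 n (d o : nat -> R) :
  \det (tridiag n.+2 d o) = d n.+2 * \det (tridiag n.+1 d o) - o n.+1 ^+ 2 * \det (tridiag n d o).
Proof.
rewrite (expand_det_row _ ord_max) !big_ord_recr /= big1 ?add0r; last first.
  move=> j _; rewrite !mxE /=; have hj := ltn_ord j.
  by rewrite !ifF ?mul0r //; apply: neqF; lia.
rewrite !mxE /= eqxx !ifF; try by apply: neqF; lia.
rewrite /cofactor tri_minor2 tri_minor /=.
have s1 : (-1) ^+ (n.+1 + n) = -1 :> R by rewrite -signr_odd addSn addnn /= odd_double.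
have s2 : (-1) ^+ (n.+1 + n.+1) = 1 :> R by rewrite -signr_odd addnn odd_double.
rewrite s1 s2; ring.
Qed.


Lemma det_tri n (d o : nat -> R) : \det (tridiag n d o) = F d o n.
Proof.
have H : forall k, \det (tridiag k d o) = F d o k /\ \det (tridiag k.+1 d o) = F d o k.+1.
  elim=> [|k [IH1 IH2]].
    by rewrite det_mx00 det_mx11 mxE.
  by split => //; rewrite det_tri_S2 IH1 IH2.
by case: (H n).
Qed.

Definition sh (p : nat) (f : nat -> R) := fun i => f (p + i)%N.

Lemma F_rec (d o : nat -> R) n : F d o n.+2 = d n.+2 * F d o n.+1 - o n.+1 ^+ 2 * F d o n.
Proof. by []. Qed.
Lemma F1 (d o : nat -> R) : F d o 1 = d 1%N. Proof. by []. Qed.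
Lemma F0 (d o : nat -> R) : F d o 0 = 1. Proof. by []. Qed.

Lemma F_split (d o : nat -> R) p q : (0 < p)%N ->
  F d o (p + q.+1) = F d o p * F (sh p d) (sh p o) q.+1
                     - o p ^+ 2 * F d o p.-1 * F (sh p.+1 d) (sh p.+1 o) q.
Proof.
case: p => // p _.
have H : forall q, F d o (p.+1 + q.+1) = F d o p.+1 * F (sh p.+1 d) (sh p.+1 o) q.+1
                     - o p.+1 ^+ 2 * F d o p * F (sh p.+2 d) (sh p.+2 o) q
  /\ F d o (p.+1 + q.+2) = F d o p.+1 * F (sh p.+1 d) (sh p.+1 o) q.+2
                     - o p.+1 ^+ 2 * F d o p * F (sh p.+2 d) (sh p.+2 o) q.+1.
  elim=> [|k [IH1 IH2]].
    rewrite addn1 addn2 !F_rec !F1 !F0 /sh !addn1 !addn2; split; genF; ring.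
  split; first exact: IH2.
  have -> : (p.+1 + k.+3 = (p.+1 + k.+1).+2)%N by lia.
  rewrite (F_rec (sh p.+1 d) _ k.+1) (F_rec (sh p.+2 d) _ k) F_rec -addnS IH2 -addnS IH1 /sh.
  rewrite !addSn !addnS; genF; ring.
by case: (H q).
Qed.

Lemma F_ext (d o d' o' : nat -> R) n :
  (forall i, (0 < i <= n)%N -> d i = d' i) -> (forall i, (0 < i < n)%N -> o i = o' i) ->
  F d o n = F d' o' n.
Proof.
move=> Hd Ho.
have H : forall k, (k.+1 <= n)%N -> F d o k = F d' o' k /\ F d o k.+1 = F d' o' k.+1.
  elim=> [|k IH] hk.
    by rewrite !F0 !F1 Hd.
  have [I1 I2] := IH (ltnW hk); split => //.
  by rewrite !F_rec I1 I2 Hd ?Ho //; lia.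
case: n Hd Ho H => [|n] Hd Ho H; first by [].
by case: (H n (leqnn _)).
Qed.

Lemma chiF n (d o : nat -> R) x :
  chi (tridiag n d o) x = F (fun i => x - d i) (fun i => - o i) n.
Proof.
rewrite /chi -det_tri; congr (\det _); apply/matrixP => i j; rewrite !mxE.
case: (i =P j) => [->|/eqP hij]; first by rewrite eqxx /= mulr1n.
rewrite mulr0n sub0r.
have -> : (i == j :> nat) = false by apply/negbTE.
by case: ifP => _ //; case: ifP => _ //; rewrite oppr0.
Qed.

Definition oA (c1 c2 : R) := fun i : nat => - (if odd i then c1 else c2).

Lemma plainF (c1 c2 z : R) (Q : nat -> R) : Q 0%N = 1 -> Q 1%N = z^+2 - c1^+2 - c2^+2 ->
  (forall k, Q k.+2 = (z^+2-c1^+2-c2^+2) * Q k.+1 - (c1*c2)^+2 * Q k) ->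
  forall k, F (fun _ => z) (oA c1 c2) k.*2.+1 = z * Q k /\
            F (fun _ => z) (oA c1 c2) k.*2.+2 = Q k.+1 + c2^+2 * Q k.
Proof.
move=> Q0 Q1 QS; elim=> [|k [I1 I2]].
  rewrite F_rec !F1 F0 Q0 Q1 /oA /=; split; ring.
have E1 : F (fun _ => z) (oA c1 c2) k.+1.*2.+1 = z * Q k.+1.
  rewrite doubleS F_rec I1 I2 /oA /= odd_double /=; ring.
split => //.
rewrite doubleS F_rec -doubleS E1 doubleS I2 QS /oA /= odd_double /=; ring.
Qed.

Lemma PstarQ (a b1 b2 x : R) : b1 != 0 -> b2 != 0 ->
  let Q := fun k => Pstar a b1 b2 k x in
  Q 0%N = 1 /\ Q 1%N = (x - a)^+2 - b1^+2 - b2^+2 /\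
  (forall k, Q k.+2 = ((x - a)^+2 - b1^+2 - b2^+2) * Q k.+1 - (b1*b2)^+2 * Q k).
Proof.
move=> h1 h2 Q.
have h2n : (2 : R) != 0 by rewrite pnatr_eq0.
have key : (b1 * b2) * (2 * (((x - a) ^+ 2 - b1 ^+ 2 - b2 ^+ 2) / (2 * b1 * b2)))
           = (x - a)^+2 - b1^+2 - b2^+2.
  by field; rewrite h1 h2.
split; first by rewrite /Q /Pstar /= expr0 mul1r.
split; first by rewrite /Q /Pstar /= expr1 key.
move=> k; rewrite /Q /Pstar /=.
set t := (((x - a) ^+ 2 - b1 ^+ 2 - b2 ^+ 2) / (2 * b1 * b2)) in key *.
rewrite -key !exprS; ring.
Qed.

Definition dA (x a : R) n (aa bb : R) :=
  fun i : nat => x - (a + (if i == 1%N then aa else 0) + (if i == n then bb else 0)).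
Definition fm (z aa : R) := fun i : nat => z - (if i == 1%N then aa else 0).

Lemma chiA n aa bb a c1 c2 x : chi (Amat n aa bb a c1 c2) x = F (dA x a n aa bb) (oA c1 c2) n.
Proof. by rewrite /Amat chiF. Qed.

Lemma fm_split z aa c1 c2 q : F (fm z aa) (oA c1 c2) q.+2
   = (z - aa) * F (fun _ => z) (oA c2 c1) q.+1 - c1^+2 * F (fun _ => z) (oA c1 c2) q.
Proof.
have := @F_split (fm z aa) (oA c1 c2) 1 q (ltn0Sn 0); rewrite add1n => ->.
rewrite F1 F0 mulr1.
congr (_ * _ - _ * _).
- apply: F_ext => i hi; rewrite /sh /fm /oA add1n /=.
    by rewrite ifF ?subr0 //; apply: neqF; lia.
  by case: (odd i).
- by rewrite /oA /= sqrrN.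
apply: F_ext => i hi; rewrite /sh /fm /oA add2n /=.
  by rewrite subr0.
by rewrite negbK.
Qed.

Lemma dA_fm x a n aa bb o j : (j < n)%N -> F (dA x a n aa bb) o j = F (fm (x - a) aa) o j.
Proof.
move=> hj; apply: F_ext => // i hi; rewrite /dA /fm.
have -> : (i == n) = false by apply: neqF; lia.
rewrite addr0; ring.
Qed.

Lemma dA_top x a n aa bb c1 c2 j : n = j.+2 ->
  F (dA x a n aa bb) (oA c1 c2) n = (x - a - bb) * F (fm (x - a) aa) (oA c1 c2) j.+1
     - (if odd j.+1 then c1 else c2) ^+ 2 * F (fm (x - a) aa) (oA c1 c2) j.
Proof.
move=> hn; rewrite {2}hn F_rec -hn !dA_fm ?hn // /oA sqrrN /dA eqxx.
have -> : (j.+2 == 1%N) = false by [].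
rewrite addr0; genF; ring.
Qed.

Lemma fm0 z o n : F (fm z 0) o n = F (fun _ => z) o n.
Proof. by apply: F_ext => // i _; rewrite /fm; case: ifP; rewrite subr0. Qed.

Ltac caseeq := repeat (case: eqP => ? /=; try (exfalso; lia)).
Ltac caseleq := repeat (case: leqP => ? /=; try (exfalso; lia)).

Lemma part2F (s1 s2 x : R) m : (1 <= m)%N ->
  let a := alpha_ s1 s2 in let b1 := beta1_ s1 in let b2 := beta2_ s2 in
  chi (defect_cap m s1 s2) x =
  F (dA x a (2 * m + 1) b2 (b1 - b2)) (oA b1 b2) (2 * m + 1) * F (dA x a (2 * m) 0 b2) (oA b1 b2) (2 * m)
  - b2 ^+ 2 * F (dA x a (2 * m) b2 0) (oA b1 b2) (2 * m) * F (dA x a (2 * m - 1)%N 0 b2) (oA b2 b1) (2 * m - 1)%N.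
Proof.
move=> hm a b1 b2; rewrite /defect_cap chiF.
have -> : (4 * m + 1 = (2 * m + 1) + (2 * m - 1).+1)%N by lia.
rewrite F_split; last by lia.
have -> : ((2 * m - 1).+1 = 2 * m)%N by lia.
have -> : ((2 * m + 1).-1 = 2 * m)%N by lia.
have -> : ((2 * m + 1).+1 = 2 * m + 2)%N by lia.
congr (_ * _ - _ * _ * _).
- apply: F_ext => i hi; rewrite /dA /a /b1 /b2 /alpha_ /beta1_ /beta2_ /eta_.
    caseeq; ring.
  rewrite /oA; caseleq; by [].
- apply: F_ext => i hi; rewrite /sh /dA /a /b1 /b2 /alpha_ /beta1_ /beta2_ /eta_.
    caseeq; ring.
  rewrite /oA; caseleq; rewrite mul2n -addnA add1n oddD odd_double /=; by case: (odd i).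
- by rewrite /oA; caseleq; rewrite mul2n addn1 /= odd_double /= sqrrN.
- apply: F_ext => i hi; rewrite /dA /a /b1 /b2 /alpha_ /beta1_ /beta2_ /eta_.
    caseeq; ring.
  rewrite /oA; caseleq; by [].
apply: F_ext => i hi; rewrite /sh /dA /a /b1 /b2 /alpha_ /beta1_ /beta2_ /eta_.
  caseeq; ring.
rewrite /oA; caseleq; rewrite mul2n -addnA oddD odd_double /=. by rewrite negbK add0n.
Qed.

Lemma XYZW (x a b1 b2 : R) k : b1 != 0 -> b2 != 0 ->
  let Q := fun k => Pstar a b1 b2 k x in let z := x - a in
  F (dA x a (k.*2.+4) 0 b2) (oA b1 b2) (k.*2.+4) = F (dA x a (k.*2.+4) b2 0) (oA b1 b2) (k.*2.+4) /\
  F (dA x a k.*2.+4.+1 b2 (b1-b2)) (oA b1 b2) k.*2.+4.+1 - b2^+2 * F (dA x a k.*2.+3 0 b2) (oA b2 b1) k.*2.+3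
  = ((z - b1) * Q k.+2
       + (b2 * (b1 - b2) * z - b2 * b1 ^+ 2 - (b1 - b2) * b2 ^+ 2) * Q k.+1)
      - b2 ^+ 2 * ((z - b2) * Q k.+1 - b2 * b1 ^+ 2 * Q k).
Proof.
move=> h1 h2 Q z.
have [Q0 [Q1 QS]] := PstarQ a x h1 h2.
have {Q0}Q0 : Q 0%N = 1 := Q0.
have {Q1}Q1 : Q 1%N = z^+2 - b1^+2 - b2^+2 := Q1.
have {QS}QS : forall k, Q k.+2 = (z^+2 - b1^+2 - b2^+2) * Q k.+1 - (b1*b2)^+2 * Q k := QS.
clearbody Q.
have QS' : forall k, Q k.+2 = (z^+2 - b2^+2 - b1^+2) * Q k.+1 - (b2*b1)^+2 * Q k.
  by move=> j; rewrite QS; congr (_ * _ - _ * _); [ring|ring].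
have PL12 := plainF Q0 Q1 QS.
have Q1' : Q 1%N = z^+2 - b2^+2 - b1^+2 by rewrite Q1; ring.
have PL21 := plainF Q0 Q1' QS'.
have E : b1^+2 * F (fun _ => z) (oA b1 b2) k.*2 = z * F (fun _ => z) (oA b1 b2) k.*2.+1 - F (fun _ => z) (oA b1 b2) k.*2.+2.
  rewrite (F_rec _ _ k.*2) /oA /= odd_double /= sqrrN; genF; ring.
rewrite !(@dA_top x a _ _ _ _ _ _ erefl) -/z.
rewrite !fm0 !fm_split subr0 E.
have [A1 A2] := PL12 k; have [B1 B2] := PL12 k.+1.
have [C1 C2] := PL21 k; have [D1 D2] := PL21 k.+1.
rewrite -!doubleS in A1 A2 B1 B2 C1 C2 D1 D2 *.
rewrite ?A1 ?A2 ?B1 ?B2 ?C1 ?C2 ?D1 ?D2 !oddS !odd_double /= QS.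
split; ring.
Qed.
End S.

Ltac genF := repeat match goal with |- context[F ?d ?o ?n] => generalize (F d o n); intro end.

Theorem mainTheorem3 (R : realFieldType) (s1 s2 : R) (m : nat) :
  0 < s1 -> s1 < s2 -> (2 <= m)%N ->
  let a := alpha_ s1 s2 in
  let b1 := beta1_ s1 in
  let b2 := beta2_ s2 in
  let C := defect_cap m s1 s2 in
  (forall x : R,
     let z := x - a in
     chi C x =
     chi (Amat (2 * m) b2 0 a b1 b2) x *
     (((z - b1) * Pstar a b1 b2 m x
       + (b2 * (b1 - b2) * z - b2 * b1 ^+ 2 - (b1 - b2) * b2 ^+ 2)
         * Pstar a b1 b2 m.-1 x)
      - b2 ^+ 2 * ((z - b2) * Pstar a b1 b2 m.-1 x
                   - b2 * b1 ^+ 2 * Pstar a b1 b2 m.-2 x)))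
  /\
  (forall x : R,
     chi C x =
     chi (Amat (2 * m + 1) b2 (b1 - b2) a b1 b2) x
       * chi (Amat (2 * m) 0 b2 a b1 b2) x
     - b2 ^+ 2 * chi (Amat (2 * m) b2 0 a b1 b2) x
               * chi (Amat (2 * m - 1) 0 b2 a b2 b1) x)
  /\
  (forall x : R,
     chi (Amat (2 * m) 0 b2 a b1 b2) x = chi (Amat (2 * m) b2 0 a b1 b2) x).
Proof.
move=> h0 h12; case: m => [|[|k]] // _ a b1 b2 C.
have hs2 : 0 < s2 by apply: lt_trans h12.
have hb1 : b1 != 0 by rewrite /b1 /beta1_ oppr_eq0 invr_eq0 gt_eqF.
have hb2 : b2 != 0 by rewrite /b2 /beta2_ oppr_eq0 invr_eq0 gt_eqF.
have P2 : forall x : R,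
     chi C x =
     chi (Amat (2 * k.+2 + 1) b2 (b1 - b2) a b1 b2) x
       * chi (Amat (2 * k.+2) 0 b2 a b1 b2) x
     - b2 ^+ 2 * chi (Amat (2 * k.+2) b2 0 a b1 b2) x
               * chi (Amat (2 * k.+2 - 1) 0 b2 a b2 b1) x.
  by move=> x; rewrite !chiA; apply: part2F.
have e0 : (2 * k.+2 = k.*2.+4)%N by lia.
have e1 : (2 * k.+2 + 1 = k.*2.+4.+1)%N by lia.
have e2 : (2 * k.+2 - 1 = k.*2.+3)%N by lia.
have P3 : forall x : R,
     chi (Amat (2 * k.+2) 0 b2 a b1 b2) x = chi (Amat (2 * k.+2) b2 0 a b1 b2) x.
  by move=> x; rewrite !chiA e0; case: (XYZW x a k hb1 hb2).
split; last by split.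
move=> x z; rewrite P2 P3.
case: (XYZW x a k hb1 hb2) => _ H; cbv beta in H.
rewrite !chiA e1 e2 e0.
rewrite [k.+2.-1]/= [k.+2.-2]/= -/z -H.
genF; ring.
Qed.
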